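(* Let $R\subset S$ be an FCP ring extension which is a $\mathcal P$-extension, with Loewy series $\{S_i\}_{i=0}^n$. Then $R\subset S$ is distributive if and only if $S_i\subset S_{i+1}$ is Boolean for each $0\leq i\leq n-1$. If these conditions hold, then $R\subset S$ has FIP.
   Context: All rings are commutative with identity. $[R,S]$ is the lattice of $R$-subalgebras of $S$ (meet = intersection, join = product). FCP: every chain in $[R,S]$ is finite; FIP: $[R,S]$ is finite. $T\subset U$ minimal means $[T,U]=\{T,U\}$; atoms of $[R,S]$ are $T$ with $R\subset T$ minimal; the socle $\mathcal S[R,S]$ is the product of all atoms. Loewy series: $S_0=R$, $S_{i+1}=\mathcal S[S_i,S]$ while $S_i\neq S$, $n$ least with $S_n=S$. An FCP extension with Loewy series $\{S_i\}_{i=0}^n$ is a $\mathcal P$-extension if $[R,S]=\bigcup_{i=0}^{n-1}[S_i,S_{i+1}]$. Distributive: $[R,S]$ is a distributive lattice; Boolean: distributive and every element has a complement ($T\cap T'=R$, $TT'=S$). *)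

(* Defs.v *)
From mathcomp Require Import all_boot all_algebra.
From mathcomp Require Import boolp classical_sets cardinality.
Set Implicit Arguments. Unset Strict Implicit. Unset Printing Implicit Defensive.
Import GRing.Theory.
Local Open Scope ring_scope.
Local Open Scope classical_set_scope.

(* A ring extension R ⊆ S is modelled by an ambient commutative ring S (a type)
   and a subring R : set S.  Intermediate rings are subsets T of S. *)
Section RingExt.
Variable S : comPzRingType.

Definition subring (T : set S) : Prop :=
  T 1 /\ (forall x y, T x -> T y -> T (x - y)) /\
  (forall x y, T x -> T y -> T (x * y)).

Definition interm (A B T : set S) : Prop :=
  subring T /\ A `<=` T /\ T `<=` B.

Definition interval (A B : set S) : set (set S) := [set T | interm A B T].

Definition gen (X : set S) : set S :=
  fun x => forall T, subring T -> X `<=` T -> T x.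

Definition prod (T U : set S) : set S := gen (T `|` U).

Definition minimal (T U : set S) : Prop :=
  T `<=` U /\ T <> U /\ forall V, interm T U V -> V = T \/ V = U.

Definition atom (A B T : set S) : Prop := interm A B T /\ minimal A T.

Definition socle (A B : set S) : set S :=
  gen (A `|` [set x | exists T, atom A B T /\ T x]).

Fixpoint loewy (R : set S) (i : nat) : set S :=
  match i with
  | 0 => R
  | i'.+1 => socle (loewy R i') setT
  end.

Definition chain (C : set (set S)) : Prop :=
  forall T U, C T -> C U -> T `<=` U \/ U `<=` T.

Definition FCP (A B : set S) : Prop :=
  forall C : set (set S), C `<=` interval A B -> chain C -> finite_set C.

Definition FIP (A B : set S) : Prop := finite_set (interval A B).

Definition loewy_length (R : set S) (n : nat) : Prop :=
  loewy R n = setT /\ forall m, (m < n)%N -> loewy R m <> setT.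

Definition P_extension (R : set S) (n : nat) : Prop :=
  forall T, interm R setT T ->
    exists2 i, (i < n)%N & interm (loewy R i) (loewy R i.+1) T.

(* distributive lattice [A,B] (meet = intersection, join = product) *)
Definition distributive (A B : set S) : Prop :=
  forall T U V, interm A B T -> interm A B U -> interm A B V ->
    T `&` prod U V = prod (T `&` U) (T `&` V) /\
    prod T (U `&` V) = prod T U `&` prod T V.

Definition boolean (A B : set S) : Prop :=
  distributive A B /\
  forall T, interm A B T ->
    exists T', interm A B T' /\ T `&` T' = A /\ prod T T' = B.

End RingExt.

(* Main.v *)
Require Import Defs.
From mathcomp Require Import all_boot all_algebra.
From mathcomp Require Import boolp classical_sets cardinality.
Set Implicit Arguments. Unset Strict Implicit. Unset Printing Implicit Defensive.
Import GRing.Theory.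
Local Open Scope classical_set_scope.

Section Aux.
Variable S : comPzRingType.
Implicit Types T U V X Y Z : set S.

Lemma gen_subring X : subring (gen X).
Proof.
split; [|split].
- by move=> T [] .
- by move=> x y Hx Hy T HT HX; have [_ [HB _]] := HT; apply: HB; [apply: Hx|apply: Hy].
- by move=> x y Hx Hy T HT HX; have [_ [_ HM]] := HT; apply: HM; [apply: Hx|apply: Hy].
Qed.

Lemma gen_incl X : X `<=` gen X.
Proof. by move=> x Xx T _ HX; apply: HX. Qed.

Lemma gen_min X T : subring T -> X `<=` T -> gen X `<=` T.
Proof. by move=> HT HX x Hx; apply: Hx. Qed.

Lemma gen_eqS X Y : subring Y -> X `<=` Y ->
  (forall T, subring T -> X `<=` T -> Y `<=` T) -> gen X = Y.
Proof.
move=> HY XY Hm; apply/seteqP; split; first exact: gen_min.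
by apply: Hm; [apply: gen_subring|apply: gen_incl].
Qed.

Lemma prod_subring T U : subring (prod T U).
Proof. exact: gen_subring. Qed.

Lemma prod_l T U : T `<=` prod T U.
Proof. by move=> x Tx; apply: gen_incl; left. Qed.

Lemma prod_r T U : U `<=` prod T U.
Proof. by move=> x Tx; apply: gen_incl; right. Qed.

Lemma prod_min T U V : subring V -> T `<=` V -> U `<=` V -> prod T U `<=` V.
Proof. by move=> HV TV UV; apply: gen_min => // x [/TV|/UV]. Qed.

Lemma prodC T U : prod T U = prod U T.
Proof. by rewrite /prod setUC. Qed.

Lemma prod_id_r T U : subring U -> T `<=` U -> prod T U = U.
Proof.
move=> HU TU; apply/seteqP; split; first exact: prod_min.
exact: prod_r.
Qed.

Lemma prod_id_l T U : subring T -> U `<=` T -> prod T U = T.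
Proof. by move=> *; rewrite prodC prod_id_r. Qed.

Lemma prod_mono T U V : subring T -> subring V -> U `<=` V -> prod T U `<=` prod T V.
Proof.
move=> HT HV UV; apply: prod_min; [exact: prod_subring|exact: prod_l|].
by move=> x /UV; apply: prod_r.
Qed.

Lemma subringI T U : subring T -> subring U -> subring (T `&` U).
Proof.
move=> [T1 [TB TM]] [U1 [UB UM]]; split; [by []|split].
- by move=> x y [? ?] [? ?]; split; [apply: TB|apply: UB].
- by move=> x y [? ?] [? ?]; split; [apply: TM|apply: UM].
Qed.

Lemma setI_idl T U : T `<=` U -> T `&` U = T.
Proof. by move=> TU; apply/seteqP; split=> [x []//|x Tx]; split=> //; apply: TU. Qed.

Lemma setI_idr T U : U `<=` T -> T `&` U = U.
Proof. by move=> UT; rewrite setIC setI_idl. Qed.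

End Aux.

Section Join.
Variable S : comPzRingType.
Implicit Types T U V X Y Z : set S.
Variables (R Si : set S).
Hypotheses (HSi : subring Si) (RSi : R `<=` Si) (D : distributive R setT).

Definition joinL (l : seq (set S)) := foldr (fun a acc => prod a acc) Si l.

Definition good (l : seq (set S)) := forall a, a \in l -> atom Si setT a.

Lemma good_cons a l : good (a :: l) -> atom Si setT a /\ good l.
Proof.
move=> g; split; first by apply: g; rewrite inE eqxx.
by move=> b bl; apply: g; rewrite inE bl orbT.
Qed.

Lemma joinL_sub l : good l -> subring (joinL l) /\ Si `<=` joinL l.
Proof.
elim: l => [|a l IH] g /=; first by split.
have [[[Ha [Sa _]] _] /IH [_ Sj]] := good_cons g.
split; first exact: prod_subring.
by move=> x /Sj; apply: prod_r.
Qed.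

Lemma joinL_ge l a : a \in l -> a `<=` joinL l.
Proof.
elim: l => [|b l IH] //=; rewrite inE => /orP [/eqP ->|/IH al]; first exact: prod_l.
by move=> x /al; apply: prod_r.
Qed.

Lemma joinL_min l Z : subring Z -> Si `<=` Z -> (forall a, a \in l -> a `<=` Z) ->
  joinL l `<=` Z.
Proof.
move=> HZ SZ; elim: l => [|b l IH] //= H.
apply: prod_min => //; first by apply: H; rewrite inE eqxx.
by apply: IH => a al; apply: H; rewrite inE al orbT.
Qed.

Lemma intR X : subring X -> Si `<=` X -> interm R setT X.
Proof. by move=> HX SX; split; [|split] => // x /RSi /SX. Qed.

Lemma meet_atom T a : subring T -> Si `<=` T -> atom Si setT a -> ~ a `<=` T ->
  T `&` a = Si.
Proof.
move=> HT ST [[Ha _] [Sa [_ Hm]]] naT.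
have : interm Si a (T `&` a).
  split; first exact: subringI.
  by split=> [x Sx|x []//]; split; [apply: ST|apply: Sa].
case/Hm => // Ea; exfalso; apply: naT; rewrite -Ea => x []//.
Qed.

Lemma meet_joinL T l : subring T -> Si `<=` T -> good l ->
  T `&` joinL l = joinL (filter (fun a => `[< a `<=` T >]) l).
Proof.
move=> HT ST; elim: l => [|a l IH] g /=; first by apply: setI_idr.
have [ga gl] := good_cons g.
have [[Ha [Sa _]] _] := ga.
have [Hj Sj] := joinL_sub gl.
have [E _] := D (intR HT ST) (intR Ha Sa) (intR Hj Sj).
rewrite E IH //.
case: (boolP `[< a `<=` T >]) => [/asboolP aT|/asboolP naT] /=.
  by rewrite setI_idr.
rewrite meet_atom //.
have [gl' _] : good (filter (fun a => `[< a `<=` T >]) l) /\ True.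
  by split=> // b; rewrite mem_filter => /andP [_ /gl].
have [Hf Sf] := joinL_sub gl'.
exact: prod_id_r.
Qed.

End Join.

Section Fin.
Variable S : comPzRingType.
Implicit Types T U V X Y Z : set S.
Variables (R Si : set S).
Hypotheses (HSi : subring Si) (RSi : R `<=` Si) (D : distributive R setT)
  (F : FCP R setT).

Lemma atoms_finite : finite_set [set T | atom Si setT T].
Proof.
apply: contrapT => /infiniteP /pcard_leP /injfunPex [f ff finj].
have fa k : atom Si setT (f k) by apply: ff.
pose fix L k := if k is k'.+1 then f k' :: L k' else [::].
have gL k : good Si (L k).
  elim: k => [|k IH] a //=; rewrite inE => /orP [/eqP ->|/IH] //.
pose J k := joinL Si (L k).
have JS k : subring (J k) /\ Si `<=` J k by apply: joinL_sub.
have Lf m k : (k <= m)%N -> filter (fun a => `[< a `<=` f m >]) (L k) = [::].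
  elim: k => [|k IH] //= km.
  rewrite IH ?(ltnW km) //.
  case: (boolP `[< f k `<=` f m >]) => // /asboolP fkm.
  have [[Hk [Sk _]] [_ [nk _]]] := fa k.
  have [_ [_ Hm]] := (fa m).2.
  have : interm Si (f m) (f k) by split; [|split].
  case/Hm => E; first by case: nk; rewrite E.
  by move: (finj k m (in_setT _) (in_setT _) E) km => ->; rewrite ltnn.
have Jmeet k : f k `&` J k = Si.
  have [[Hk [Sk _]] _] := fa k.
  by rewrite /J (meet_joinL HSi RSi D) // Lf.
have Jinc k : J k `<=` J k.+1 by move=> x Jx; apply: prod_r.
have Jneq k : J k <> J k.+1.
  move=> E; have [_ [nk _]] := (fa k).2; apply: nk.
  rewrite -(Jmeet k) E setI_idl //; exact: prod_l.
have Jmono m k : (m <= k)%N -> J m `<=` J k.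
  move=> /subnK <-; elim: (k - m)%N => [|d IH] //= x /IH; apply: Jinc.
have Jinj : injective J.
  move=> m k E; case: (ltngtP m k) => // [mk|km]; exfalso.
    apply: (Jneq m); apply/seteqP; split; first exact: Jinc.
    by rewrite E; apply: Jmono.
  apply: (Jneq k); apply/seteqP; split; first exact: Jinc.
  by rewrite -E; apply: Jmono.
have : finite_set (range J).
  apply: F.
    move=> _ [k _ <-]; have [HJ SJ] := JS k; exact: (intR RSi HJ SJ).
  move=> _ _ [m _ <-] [k _ <-]; case: (leqP m k) => mk.
    by left; apply: Jmono.
  by right; apply: Jmono; apply: ltnW.
apply/infiniteP/pcard_leP/injfunPex; exists J => //.
by move=> x y _ _; apply: Jinj.
Qed.

End Fin.

Section Block.
Variable S : comPzRingType.
Implicit Types T U V X Y Z : set S.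
Variables (R Si : set S).
Hypotheses (HSi : subring Si) (RSi : R `<=` Si) (D : distributive R setT)
  (F : FCP R setT).

Lemma atoms_list : exists l, good Si l /\ forall a, atom Si setT a -> a \in l.
Proof.
have /finite_seqP [l El] := atoms_finite HSi RSi D F.
exists l; split=> a.
  by move=> al; have : [set` l] a by []; rewrite -El.
by move=> Aa; have : [set T | atom Si setT T] a by []; rewrite El.
Qed.

Lemma socle_joinL l : good Si l -> (forall a, atom Si setT a -> a \in l) ->
  socle Si setT = joinL Si l.
Proof.
move=> gl la; have [Hj Sj] := joinL_sub HSi gl.
rewrite /socle; apply: gen_eqS => //.
  move=> x [/Sj //|[T [AT Tx]]]; have := @joinL_ge S Si l T (la _ AT). exact.
move=> Z HZ SZ; apply: joinL_min => // [x Sx|a al x ax]; first by apply: SZ; left.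
by apply: SZ; right; exists a; split=> //; apply: gl.
Qed.

Lemma block_bool : boolean Si (socle Si setT).
Proof.
have [l [gl la]] := atoms_list.
have Esoc := socle_joinL gl la.
have [Hj Sj] := joinL_sub HSi gl.
have intB X : interm Si (socle Si setT) X -> interm R setT X.
  by move=> [HX [SX _]]; apply: (intR RSi).
split.
  by move=> T U V /intB IT /intB IU /intB IV; apply: D.
move=> T [HT [ST TB]].
pose p := fun a => `[< a `<=` T >].
have gf q : good Si (filter q l) by move=> b; rewrite mem_filter => /andP [_ /gl].
have [Hc Sc] := joinL_sub HSi (gf (predC p)).
exists (joinL Si (filter (predC p) l)); split; [|split].
- split; [by []|split=> //]; rewrite Esoc; apply: joinL_min => // a.
  by rewrite mem_filter => /andP [_ al]; apply: joinL_ge.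
- rewrite (meet_joinL HSi RSi D) // -filter_predI.
  rewrite (eq_filter (a2 := pred0)) ?filter_pred0 //.
  by move=> a /=; rewrite /p; case: (`[< a `<=` T >]).
- apply/seteqP; split.
    apply: prod_min => //; first by rewrite Esoc.
    by rewrite Esoc; apply: joinL_min => // a;
      rewrite mem_filter => /andP [_ al]; apply: joinL_ge.
  rewrite Esoc; apply: joinL_min => //; first exact: prod_subring.
    by move=> x /ST; apply: prod_l.
  move=> a al; case: (boolP (p a)) => [/asboolP aT|npa] x /=.
    by move=> /aT; apply: prod_l.
  move=> ax; apply: prod_r; apply: (@joinL_ge S Si _ a) => //.
  by rewrite mem_filter al andbT.
Qed.

Lemma block_finite : finite_set (Defs.interval Si (socle Si setT)).
Proof.
have [l [gl la]] := atoms_list.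
have Esoc := socle_joinL gl la.
pose g := fun m : (size l).-tuple bool => joinL Si (mask m l).
apply: (sub_finite_set (B := g @` setT)); last exact/finite_image/finite_finset.
move=> T [HT [ST TB]].
pose p := fun a => `[< a `<=` T >].
exists (map_tuple p (in_tuple l)) => //.
rewrite /g /= -filter_mask -(meet_joinL HSi RSi D) // -Esoc.
exact: setI_idl.
Qed.

End Block.

Section Main.
Variable S : comPzRingType.
Implicit Types T U V X Y Z : set S.

Lemma dist_cases T U V : subring T -> subring U -> subring V ->
  [\/ U `<=` V, V `<=` U, T `<=` U /\ T `<=` V | U `<=` T /\ V `<=` T] ->
  T `&` prod U V = prod (T `&` U) (T `&` V) /\
  prod T (U `&` V) = prod T U `&` prod T V.
Proof.
move=> HT HU HV.
have HTU := subringI HT HU; have HTV := subringI HT HV; have HUV := subringI HU HV.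
case=> [UV|VU|[TU TV]|[UT VT]].
- rewrite (prod_id_r HV UV) (@prod_id_r _ (T `&` U) (T `&` V) HTV); last first.
    by move=> x [Tx Ux]; split=> //; apply: UV.
  rewrite (setI_idl UV) (setI_idl (prod_mono HT HV UV)) //.
- rewrite (prod_id_l HU VU) (@prod_id_l _ (T `&` U) (T `&` V) HTU); last first.
    by move=> x [Tx Ux]; split=> //; apply: VU.
  rewrite (setI_idr VU) (setI_idr (prod_mono HT HU VU)) //.
- have TP : T `<=` prod U V by move=> x /TU; apply: prod_l.
  rewrite (setI_idl TP) (setI_idl TU) (setI_idl TV) (prod_id_r HT (fun x a => a)).
  have TUV : T `<=` U `&` V by move=> x Tx; split; [apply: TU|apply: TV].
  by rewrite (prod_id_r HUV TUV) (prod_id_r HU TU) (prod_id_r HV TV).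
- rewrite (setI_idr (prod_min HT UT VT)) (setI_idr UT) (setI_idr VT).
  have UVT : U `&` V `<=` T by move=> x [/UT].
  by rewrite (prod_id_l HT UVT) (prod_id_l HT UT) (prod_id_l HT VT) setIid.
Qed.

Variable R : set S.
Hypothesis HR : subring R.

Lemma loewy_sub i : subring (loewy R i) /\ R `<=` loewy R i.
Proof.
elim: i => [|i [H1 H2]] /=; first by split. rewrite /socle; split; first exact: gen_subring.
by move=> x /H2 Hx; apply: gen_incl; left.
Qed.

Lemma loewy_inc i : loewy R i `<=` loewy R i.+1.
Proof. by move=> x Hx; apply: gen_incl; left. Qed.

Lemma loewy_mono i j : (i <= j)%N -> loewy R i `<=` loewy R j.
Proof.
move=> /subnK <-; elim: (j - i)%N => [|d IH] //= x /IH; apply: loewy_inc.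
Qed.

Lemma block_cmp i j X Y : (i < j)%N ->
  interm (loewy R i) (loewy R i.+1) X -> interm (loewy R j) (loewy R j.+1) Y ->
  X `<=` Y.
Proof.
move=> ij [_ [_ XB]] [_ [YB _]] x /XB /(loewy_mono ij) /YB //.
Qed.

End Main.

Theorem theorem8p5 (S : comPzRingType) (R : set S) (n : nat) :
  subring R -> FCP R setT -> loewy_length R n -> P_extension R n ->
  (distributive R setT <-> (forall i, (i < n)%N -> boolean (loewy R i) (loewy R i.+1)))
  /\ (distributive R setT -> FIP R setT).
Proof.
move=> HR F [Ln _] P.
split; [split|].
- move=> D i _; have [H1 H2] := loewy_sub HR i.
  exact: (block_bool H1 H2 D F).
- move=> B T U V IT IU IV.
  have [iT iTn BT] := P T IT.
  have [iU iUn BU] := P U IU.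
  have [iV iVn BV] := P V IV.
  have [HT _] := IT; have [HU _] := IU; have [HV _] := IV.
  case: (ltngtP iU iV) => [uv|vu|Euv].
  + apply: dist_cases => //; apply: Or41; exact: (block_cmp uv BU BV).
  + apply: dist_cases => //; apply: Or42; exact: (block_cmp vu BV BU).
  + subst iV; case: (ltngtP iT iU) => [tu|ut|Etu].
    * apply: dist_cases => //; apply: Or43; split; [exact: (block_cmp tu BT BU)|exact: (block_cmp tu BT BV)].
    * apply: dist_cases => //; apply: Or44; split; [exact: (block_cmp ut BU BT)|exact: (block_cmp ut BV BT)].
    * subst iU; have [D _] := B iT iTn; exact: D BT BU BV.
- move=> D.
  apply: (sub_finite_set (B := \bigcup_(i in `I_n) Defs.interval (loewy R i) (loewy R i.+1))).
    by move=> T IT; have [i ilt Bi] := P T IT; exists i.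
  apply: bigcup_finite; first exact: finite_II.
  move=> i _; have [H1 H2] := loewy_sub HR i.
  exact: (block_finite H1 H2 D F).
Qed.
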